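(* For $n\ge 1$ and $1\le k\le n$, the number of parking functions $\pi\in\mathrm{PF}_n$ with $\pi_1=k$ equals $$\sum_{s=0}^{n-k}\binom{n-1}{s}(s+1)^{s-1}(n-s)^{n-s-2}.$$
   Context: A parking function of length $n$ is a sequence $(\pi_1,\dots,\pi_n)$ with $1\le\pi_i\le n$ such that $\#\{t:\pi_t\le i\}\ge i$ for all $1\le i\le n$; $\mathrm{PF}_n$ denotes the set of these. (Here $0^{-1}$ does not occur; for $s=n-1$ the factor $(n-s)^{n-s-2}=1^{-1}=1$.) *)

(* Defs.v *)
From HB Require Import structures.
From mathcomp Require Import all_boot all_order all_algebra.
Set Implicit Arguments. Unset Strict Implicit. Unset Printing Implicit Defensive.

(* We represent a candidate as an n-tuple of elements of 'I_n.+1 (values 0..n),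
   so the constraint 1 <= pi_t is stated explicitly. pi_1 is the head (index 0). *)
Definition is_parking_function (n : nat) (p : n.-tuple 'I_n.+1) : bool :=
  all (fun x : 'I_n.+1 => 1 <= x) p &&
  [forall i : 'I_n.+1, (1 <= i) ==> (i <= count (fun x : 'I_n.+1 => x <= i) p)].

Definition PF (n : nat) : {set n.-tuple 'I_n.+1} :=
  [set p | is_parking_function p].

Definition pf_first (n : nat) (p : n.-tuple 'I_n.+1) : nat :=
  nth 0%N (map (@nat_of_ord n.+1) p) 0.

(* Main.v *)
Require Import Defs.
From HB Require Import structures.
From mathcomp Require Import all_boot all_order all_algebra.
From mathcomp Require Import zify.
Import GRing.Theory Num.Theory.
Set Implicit Arguments. Unset Strict Implicit. Unset Printing Implicit Defensive.

Definition cntw (B N : nat) (w : seq nat -> nat) : nat :=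
  \sum_(t : N.-tuple 'I_B) w (map val t).

Lemma cntw0 B w : cntw B 0 w = w [::].
Proof.
rewrite /cntw (big_pred1 [tuple]) //= => t.
by apply/esym/eqP; rewrite [t]tuple0.
Qed.

Lemma cntwS B N w :
  cntw B N.+1 w = \sum_(x < B) cntw B N (fun s => w (val x :: s)).
Proof.
rewrite /cntw.
rewrite (reindex (fun p : 'I_B * N.-tuple 'I_B => cons_tuple p.1 p.2)) /=.
  rewrite -(pair_big xpredT xpredT (fun x t => w (map val (cons_tuple x t)))) /=.
  by [].
exists (fun t : N.+1.-tuple 'I_B => (thead t, behead_tuple t)).
  by move=> [x t] _ /=; congr pair; apply: val_inj.
by move=> t _ /=; rewrite [in RHS](tuple_eta t).
Qed.

Lemma cntw_ext B N w1 w2 :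
  (forall s, size s = N -> all (fun x => x < B) s -> w1 s = w2 s) ->
  cntw B N w1 = cntw B N w2.
Proof.
move=> H; apply: eq_bigr => t _; apply: H; first by rewrite size_map size_tuple.
apply/allP => x /mapP [y _ ->]; exact: ltn_ord.
Qed.

Lemma cntw_sum B N (I : Type) (r : seq I) (P : pred I) (w : I -> seq nat -> nat) :
  cntw B N (fun s => \sum_(i <- r | P i) w i s) = \sum_(i <- r | P i) cntw B N (w i).
Proof. by rewrite /cntw exchange_big. Qed.

Lemma cntw_const B N c : cntw B N (fun _ => c) = B ^ N * c.
Proof. by rewrite /cntw sum_nat_const card_tuple card_ord. Qed.

Lemma cntw_zero B N w :
  (forall s, size s = N -> all (fun x => x < B) s -> w s = 0) -> cntw B N w = 0.
Proof.
move=> H; rewrite (cntw_ext (w2 := fun _ => 0)) //.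
by rewrite cntw_const muln0.
Qed.


Lemma cntw_bound B B' N w : B' <= B ->
  (forall s, size s = N -> all (fun x => x < B) s -> w s != 0 -> all (fun x => x < B') s) ->
  cntw B N w = cntw B' N w.
Proof.
move=> hB; elim: N w => [|N IH] w H; first by rewrite !cntw0.
rewrite !cntwS (big_ord_widen B (fun x => cntw B' N (fun s => w (x :: s))) hB).
rewrite [RHS]big_mkcond; apply: eq_bigr => x _; case: ifP => hx.
  apply: IH => s hs hsB hw.
  have := H (val x :: s); rewrite /= hs ltn_ord hsB => /(_ erefl erefl hw).
  by case/andP.
apply: cntw_zero => s hs hsB; apply/eqP; apply: contraFT hx => hw.
have := H (val x :: s); rewrite /= hs ltn_ord hsB => /(_ erefl erefl hw).
by case/andP.
Qed.

Lemma cntw_shift c B N w :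
  cntw (c + B) N (fun s => all (fun x => c <= x) s * w (map (subn^~ c) s)) = cntw B N w.
Proof.
elim: N w => [|N IH] w; first by rewrite !cntw0 /= mul1n.
rewrite !cntwS big_split_ord /=.
rewrite big1 ?add0n => [|i _]; last first.
  apply: cntw_zero => s _ _ /=.
  by rewrite leqNgt ltn_ord.
apply: eq_bigr => i _; rewrite -IH; apply: cntw_ext => s _ _ /=.
by rewrite leq_addr addKn.
Qed.

Lemma pascal_sum N (a b : nat -> nat) :
  \sum_(j < N.+2) 'C(N.+1, j) * a j * b (N.+1 - j) =
  \sum_(j < N.+1) 'C(N, j) * a j.+1 * b (N - j) +
  \sum_(j < N.+1) 'C(N, j) * a j * b (N - j).+1.
Proof.
rewrite big_ord_recl /=.
under eq_bigr => i _ do rewrite binS mulnDl mulnDl subSS /bump /= add1n.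
rewrite big_split /=.
have E1 : \sum_(j < N.+1) 'C(N, j) * a j * b (N - j).+1 =
   'C(N, 0) * a 0 * b N.+1 + \sum_(i < N) 'C(N, i.+1) * a i.+1 * b (N - i).
  rewrite big_ord_recl /=; congr (_ + _); first by rewrite subn0.
  by apply: eq_bigr => i _; rewrite /bump /= add1n subnSK ?ltn_ord.
have E2 : \sum_(i < N.+1) 'C(N, i.+1) * a i.+1 * b (N - i)
   = \sum_(i < N) 'C(N, i.+1) * a i.+1 * b (N - i) + 0.
  by rewrite big_ord_recr /= bin_small // !mul0n.
rewrite E1 E2 subn0 !bin0; lia.
Qed.

Section Shuffle.
Variables (B c : nat).

Definition Aw (X : seq nat -> nat) j :=
  cntw B j (fun u => all (fun x => x <= c) u * X u).
Definition Bw (Y : seq nat -> nat) j :=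
  cntw B j (fun v => all (fun x => c < x) v * Y v).

Lemma Aw_S X j : Aw X j.+1 = \sum_(x < B | x <= c) Aw (fun u => X (val x :: u)) j.
Proof.
rewrite /Aw cntwS [RHS]big_mkcond; apply: eq_bigr => x _ /=.
case: ifP => hx /=; first by [].
by apply: cntw_zero => s _ _; rewrite mul0n.
Qed.

Lemma Bw_S Y j : Bw Y j.+1 = \sum_(x < B | ~~ (x <= c)) Bw (fun u => Y (val x :: u)) j.
Proof.
rewrite /Bw cntwS [RHS]big_mkcond; apply: eq_bigr => x _ /=.
rewrite ltnNge; case: ifP => hx /=; first by [].
by apply: cntw_zero => s _ _; rewrite mul0n.
Qed.

Lemma shuffle N (X Y : seq nat -> nat) :
  cntw B N (fun s => X (filter (fun x => x <= c) s) * Y (filter (fun x => c < x) s)) =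
  \sum_(j < N.+1) 'C(N, j) * Aw X j * Bw Y (N - j).
Proof.
elim: N X Y => [|N IH] X Y.
  by rewrite cntw0 big_ord1 /Aw /Bw !cntw0 /= bin0 !mul1n.
rewrite cntwS (bigID (fun x : 'I_B => x <= c)) /=.
rewrite pascal_sum.
have -> : \sum_(i < B | i <= c) cntw B N (fun s => X [seq x <- val i :: s | x <= c] *
      Y [seq x <- val i :: s | c < x]) =
   \sum_(i < B | i <= c) \sum_(j < N.+1) 'C(N, j) * Aw (fun u => X (val i :: u)) j * Bw Y (N - j).
  apply: eq_bigr => i hi; rewrite -IH; apply: cntw_ext => s _ _ /=.
  by rewrite hi ltnNge hi.
have -> : \sum_(i < B | ~~ (i <= c)) cntw B N (fun s => X [seq x <- val i :: s | x <= c] *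
      Y [seq x <- val i :: s | c < x]) =
   \sum_(i < B | ~~ (i <= c)) \sum_(j < N.+1) 'C(N, j) * Aw X j * Bw (fun u => Y (val i :: u)) (N - j).
  apply: eq_bigr => i hi; rewrite -IH; apply: cntw_ext => s _ _ /=.
  by rewrite (negbTE hi) ltnNge hi.
rewrite [X in X + _ = _]exchange_big [X in _ + X = _]exchange_big /=.
congr (_ + _); apply: eq_bigr => j _.
  rewrite Aw_S -mulnA big_distrl big_distrr /=.
  by apply: eq_bigr => i _; rewrite mulnA.
rewrite Bw_S.
set K := _ * Aw X j; by rewrite big_distrr.
Qed.

End Shuffle.


Ltac bcase := repeat match goal with |- context [ leq ?a ?b ] => case: (leqP a b) => ? end.

Definition pf (m : nat) (u : seq nat) : bool :=
  (size u == m) && all (fun i => i <= count (fun x => 0 < x <= i) u) (iota 1 m).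

Lemma pfP m u : reflect (size u = m /\ forall i, 0 < i <= m -> i <= count (fun x => 0 < x <= i) u)
  (pf m u).
Proof.
apply: (iffP andP) => [[/eqP hs /allP H]|[hs H]]; split.
- by [].
- by move=> i hi; apply: H; rewrite mem_iota; lia.
- by apply/eqP.
- by apply/allP => i; rewrite mem_iota => hi; apply: H; lia.
Qed.

Lemma pf_bound m u : pf m u -> all (fun x => x < m.+1) u.
Proof.
case/pfP => hs H; case: m hs H => [|m] hs H.
  by case: u {H} hs.
have := H m.+1 (leqnn _) => /=.
have := count_size (fun x => 0 < x <= m.+1) u; rewrite hs => h1 h2.
have : count (fun x => 0 < x <= m.+1) u == size u by rewrite hs eqn_leq h1 h2.
rewrite -all_count => /allP hA; apply/allP => x /hA; lia.
Qed.

Lemma cnt_int a b u :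
  count (fun x => a < x <= b) u = count (fun x => x < b.+1) u - count (fun x => x < a.+1) u.
Proof.
case: (leqP a b) => hab.
  have -> : count (fun x => x < b.+1) u = count (fun x => x < a.+1) u + count (fun x => a < x <= b) u.
    by elim: u => //= x u ->; bcase; lia.
  by rewrite addKn.
rewrite (eq_count (a2 := pred0)) ?count_pred0; last by move=> x /=; bcase; lia.
apply/esym/eqP; rewrite subn_eq0; apply: sub_count => x /=; lia.
Qed.

Definition sh L d x := (x + d) %% L.

Lemma cntw_shinv L N d w : 0 < L ->
  cntw L N (fun u => w (map (sh L d) u)) = cntw L N w.
Proof.
move=> hL; elim: N w => [|N IH] w; first by rewrite !cntw0.
rewrite !cntwS.
have hf : forall x : 'I_L, sh L d x < L by move=> x; rewrite /sh ltn_mod.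
pose f (x : 'I_L) : 'I_L := Ordinal (hf x).
have finj : injective f.
  move=> x y /(congr1 val) /= /eqP; rewrite /sh eqn_modDr.
  by rewrite !modn_small // => /eqP /val_inj.
rewrite [RHS](reindex_inj finj) /=; apply: eq_bigr => x _.
by rewrite -(IH (fun s => w (sh L d x :: s))).
Qed.

Definition qd L d := if d == 0 then 0 else L - d.

Lemma count_sh L d i u : d < L -> i < L -> all (fun x => x < L) u ->
  count (fun x => 0 < x <= i) (map (sh L d) u) =
  count (fun x => qd L d < x <= qd L d + i) u + count (fun x => x < (qd L d + i).+1 - L) u.
Proof.
move=> hd hi; rewrite count_map /qd.
elim: u => //= x u IH /andP [hx hu]; rewrite IH // /sh.
case: eqP => [->|hd0].
  rewrite addn0 modn_small //; bcase; lia.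
case: (ltnP (x + d) L) => hxd.
  rewrite modn_small //; bcase; lia.
have -> : (x + d) %% L = x + d - L.
  by rewrite -{1}(subnK hxd) modnDr modn_small //; lia.
bcase; lia.
Qed.

Definition Good (C : nat -> nat) m p :=
  (forall x, p < x <= m.+1 -> C p + x <= C x + p) /\
  (forall y, 0 < y < p -> C p + y < C y + p).

Section Core.
Variables (m : nat) (C : nat -> nat).
Hypotheses (hC0 : C 0 = 0) (hCm : forall z, m.+1 <= z -> C z = m)
  (hmono : forall a b, a <= b -> C a <= C b).

Lemma core_iff q : q <= m ->
  (forall i, 0 < i <= m -> i <= C (q+i).+1 - C q.+1 + C ((q+i).+1 - m.+1)) <-> Good C m q.+1.
Proof.
move=> hq; split => [H|[G1 G2] i hi].
  split.
    move=> x hx; have := H (x - q.+1) ltac:(lia).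
    rewrite (_ : (q + (x - q.+1)).+1 = x); last by lia.
    rewrite (_ : x - m.+1 = 0); last by lia.
    rewrite hC0; have := hmono (_ : q.+1 <= x); lia.
  move=> y hy; have := H (y + m - q) ltac:(lia).
  rewrite (_ : (q + (y + m - q)).+1 = y + m.+1); last by lia.
  rewrite hCm; last by lia.
  rewrite (_ : y + m.+1 - m.+1 = y); last by lia.
  have : C q.+1 <= m by rewrite -(hCm (leqnn m.+1)); apply: hmono; lia.
  lia.
case: (leqP (q+i).+1 m.+1) => hqi.
  have := G1 (q+i).+1 ltac:(lia).
  rewrite (_ : (q + i).+1 - m.+1 = 0); last by lia.
  rewrite hC0; lia.
have := G2 ((q+i).+1 - m.+1) ltac:(lia).
rewrite (hCm (z := (q+i).+1)); last by lia.
have : C q.+1 <= m by rewrite -(hCm (leqnn m.+1)); apply: hmono; lia.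
  lia.
Qed.

Lemma good_uniq p1 p2 : Good C m p1 -> Good C m p2 -> p1 <= m.+1 -> p2 <= m.+1 ->
  0 < p1 -> 0 < p2 -> p1 = p2.
Proof.
move=> [A1 B1] [A2 B2] h1 h2 h3 h4.
case: (ltngtP p1 p2) => // h.
  have := A1 p2 ltac:(lia); have := B2 p1 ltac:(lia); lia.
have := A2 p1 ltac:(lia); have := B1 p2 ltac:(lia); lia.
Qed.

Lemma good_ex : exists p, [/\ 0 < p, p <= m.+1 & Good C m p].
Proof.
pose v z := C z + (m.+1 - z).
pose P1 k := has (fun z => v z == k) (iota 1 m.+1).
have ex1 : exists k, P1 k by exists (v 1); apply/hasP; exists 1 => //; rewrite mem_iota; lia.
case: (ex_minnP ex1) => k0 hk0 mink0.
pose P2 z := (0 < z <= m.+1) && (v z == k0).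
have ex2 : exists z, P2 z.
  case/hasP: hk0 => z; rewrite mem_iota => hz /eqP hv; exists z; rewrite /P2 hv eqxx; lia.
case: (ex_minnP ex2) => p /andP [hp /eqP hvp] minp.
have kle : forall z, 0 < z <= m.+1 -> k0 <= v z.
  by move=> z hz; apply: mink0; apply/hasP; exists z => //; rewrite mem_iota; lia.
exists p; split; [lia|lia|split].
  move=> x hx; have := kle x ltac:(lia); rewrite -hvp /v; lia.
move=> y hy; have := kle y ltac:(lia).
case: (eqVneq (v y) k0) => hvy.
  have := minp y; rewrite /P2 hvy eqxx andbT; lia.
rewrite -hvp /v in hvy *; lia.
Qed.

End Core.

Lemma cycle_lemma m u : size u = m -> all (fun x => x < m.+1) u ->
  \sum_(d < m.+1) pf m (map (sh m.+1 d) u) = 1.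
Proof.
move=> hs hu.
pose C z := count (fun x => x < z) u.
have hC0 : C 0 = 0 by rewrite /C (eq_count (a2 := pred0)) ?count_pred0.
have hCm : forall z, m.+1 <= z -> C z = m.
  move=> z hz; apply/eqP; rewrite /C -hs -all_count; apply/allP => x hx.
  by have := allP hu x hx; lia.
have hmono : forall a b, a <= b -> C a <= C b.
  by move=> a b hab; apply: sub_count => x /=; lia.
have key : forall d, d < m.+1 -> pf m (map (sh m.+1 d) u) <-> Good C m (qd m.+1 d).+1.
  move=> d hd; rewrite -(@core_iff m C hC0 hCm hmono); last by rewrite /qd; case: eqP; lia.
  split.
    case/pfP => _ H i hi; have := H i hi; rewrite count_sh //; last by lia.
    by rewrite cnt_int.
  move=> H; apply/pfP; rewrite size_map; split => // i hi.
  rewrite count_sh //; last by lia.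
  by rewrite cnt_int; apply: H.
have qinj : forall d1 d2, d1 < m.+1 -> d2 < m.+1 -> qd m.+1 d1 = qd m.+1 d2 -> d1 = d2.
  by move=> d1 d2 h1 h2; rewrite /qd; do 2 case: eqP; lia.
case: (@good_ex m C hC0) => p [hp0 hp1 hG].
pose d0 := if p == 1 then 0 else m.+1 - p.-1.
have hd0 : d0 < m.+1 by rewrite /d0; case: eqP; lia.
have hqd0 : (qd m.+1 d0).+1 = p by rewrite /d0 /qd; do 2 case: eqP; lia.
rewrite (bigD1 (Ordinal hd0)) //= big1 ?addn0.
  by have /key := hd0; rewrite hqd0 => -[_ /(_ hG) ->].
move=> d hd; apply/eqP; rewrite eqb0; apply/negP => /(key d (ltn_ord d)) hGd.
have := good_uniq hC0 hGd hG.
have hq : qd m.+1 d <= m by rewrite /qd; case: eqP; have := ltn_ord d; lia.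
move=> /(_ ltac:(lia) hp1 ltac:(lia) hp0) hpq.
move: hd; rewrite -val_eqE /=; apply/negP; rewrite negbK; apply/eqP.
apply: qinj => //; lia.
Qed.

Lemma pollak m : m.+1 * cntw m.+1 m (pf m) = m.+1 ^ m.
Proof.
have E : \sum_(d < m.+1) cntw m.+1 m (fun u => pf m (map (sh m.+1 d) u)) = m.+1 * cntw m.+1 m (pf m).
  under eq_bigr => d _ do rewrite (@cntw_shinv m.+1 m d (pf m)) //.
  by rewrite sum_nat_const card_ord.
rewrite -E -cntw_sum (cntw_ext (w2 := fun _ => 1)) ?cntw_const ?muln1 //.
by move=> s hs hb; apply: cycle_lemma.
Qed.


Section DecCore.
Variables (N k : nat) (C : nat -> nat).
Hypotheses (hCN : C N.+2 = N) (hmono : forall a b, a <= b -> C a <= C b)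
  (hk : 0 < k <= N.+1).

Definition LHSP := forall i, 0 < i <= N.+1 -> i <= (k <= i) + (C i.+1 - C 1).
Definition TP s := (C s.+1 = s /\ forall i, 0 < i <= s -> i <= C i.+1 - C 1) /\
  (N - C s.+1 = N - s /\ forall i, 0 < i <= N - s -> i <= C (s.+1 + i).+1 - C s.+2).

Lemma TP_C1 s : TP s -> C 1 = 0.
Proof.
move=> [[h1 h2] _]; case: s h1 h2 => [|s] h1 h2; first by [].
have := h2 s.+1 ltac:(lia); lia.
Qed.

Lemma dec_a s : s <= N -> k <= s.+1 -> TP s -> LHSP.
Proof.
move=> hs hks T; have C1 := TP_C1 T; move: T => [[h1 h2] [h3 h4]] i hi.
rewrite C1 subn0.
case: (leqP i s) => his.
  have := h2 i ltac:(lia); lia.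
case: (eqVneq i s.+1) => [->|hne].
  have := hmono (leqnSn s.+1); lia.
have := h4 (i - s.+1) ltac:(lia).
rewrite (_ : (s.+1 + (i - s.+1)).+1 = i.+1); last by lia.
have := hmono (leqnSn s.+1); lia.
Qed.

Lemma dec_b s1 s2 : s1 <= N -> s2 <= N -> TP s1 -> TP s2 -> s1 = s2.
Proof.
wlog h12 : s1 s2 / s1 <= s2.
  move=> W h1 h2 T1 T2; case: (leqP s1 s2) => h; first exact: W.
  by apply/esym/W => //; lia.
move=> h1 h2 T1 T2; case: (eqVneq s1 s2) => // hne.
have C1 := TP_C1 T1.
move: T1 T2 => [[a1 a2] [a3 a4]] [[b1 b2] [b3 b4]].
have := b2 s1.+1 ltac:(lia).
have := a4 (N - s1) ltac:(lia).
rewrite (_ : (s1.+1 + (N - s1)).+1 = N.+2); last by lia.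
rewrite hCN C1; lia.
Qed.

Lemma dec_c : LHSP -> exists s, [/\ s <= N, k <= s.+1 & TP s].
Proof.
move=> H.
have C1 : C 1 = 0.
  have hkN : k <= N.+1 by lia.
  have := @hmono 1 N.+2 isT.
  have := H N.+1 ltac:(lia); rewrite hCN hkN /=; lia.
have ex : exists i, C i.+2 == i by exists N; rewrite hCN.
case: (ex_minnP ex) => s /eqP hs mins.
have sN : s <= N by apply: mins; rewrite hCN.
have claim : forall j, 0 < j <= s -> j <= C j.+1.
  move=> j hj; have := H j ltac:(lia).
  have : C (j.-1).+2 != j.-1.
    by apply/negP => /mins; lia.
  rewrite (_ : (j.-1).+2 = j.+1); last by lia.
  move/eqP; lia.
have hs1 : C s.+1 = s.
  have := hmono (leqnSn s.+1); case: s hs mins sN claim => [|s] hs mins sN claim.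
    by rewrite C1.
  have := claim s.+1 ltac:(lia); lia.
have ks : k <= s.+1.
  case: (leqP k s.+1) => // hks.
  have := H s.+1 ltac:(lia); rewrite C1; case: leqP; lia.
exists s; split => //; split; split.
- by [].
- by move=> i hi; rewrite C1 subn0; apply: claim.
- by rewrite hs1.
move=> i hi; have := H (s.+1 + i) ltac:(lia); rewrite C1 hs; case: (leqP k (s.+1 + i)) => /= _; lia.
Qed.

End DecCore.

Lemma decomp N k u : 0 < k <= N.+1 -> size u = N -> all (fun x => x < N.+2) u ->
  (pf N.+1 (k :: u) : nat) = \sum_(t < (N.+1 - k).+1)
     (pf (N - t) (filter (fun x => x <= N - t) u) *
      pf t (map (subn^~ (N - t).+1) (filter (fun x => N - t < x) u))).
Proof.
move=> hk hs hu.
pose C z := count (fun x => x < z) u.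
have hCN : C N.+2 = N.
  apply/eqP; rewrite /C -{2}hs -all_count; exact: hu.
have hmono : forall a b, a <= b -> C a <= C b.
  by move=> a b hab; apply: sub_count => x /=; lia.
have conv1 : pf N.+1 (k :: u) <-> LHSP N k C.
  split.
    case/pfP => _ H i hi; have := H i hi => /=.
    by rewrite cnt_int /C; case: (leqP k i) => /= _; case: (ltnP 0 k); lia.
  move=> H; apply/pfP; split; first by rewrite /= hs.
  move=> i hi /=; rewrite cnt_int; have := H i hi.
  by rewrite /C; case: (leqP k i) => /= _; case: (ltnP 0 k); lia.
have conv2 : forall s m, s <= N -> m = N - s ->
   pf s (filter (fun x => x <= s) u) && pf m (map (subn^~ s.+1) (filter (fun x => s < x) u))
   <-> TP N C s.
  move=> s m hsN ->.
  have sz1 : size (filter (fun x => x <= s) u) = C s.+1 by rewrite size_filter.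
  have sz2 : size (map (subn^~ s.+1) (filter (fun x => s < x) u)) = N - C s.+1.
    rewrite size_map size_filter -hs -(count_predC (fun x => x < s.+1) u) addKn.
    by apply: eq_count => x /=; rewrite -leqNgt.
  have c1 : forall i, i <= s -> count (fun x => 0 < x <= i) (filter (fun x => x <= s) u) = C i.+1 - C 1.
    move=> i his; rewrite count_filter -cnt_int; apply: eq_count => x /=; bcase; lia.
  have c2 : forall i, count (fun x => 0 < x <= i) (map (subn^~ s.+1) (filter (fun x => s < x) u))
              = C (s.+1 + i).+1 - C s.+2.
    move=> i; rewrite count_map count_filter -cnt_int; apply: eq_count => x /=; bcase; lia.
  split.
    case/andP => /pfP [h1 h2] /pfP [h3 h4]; split; split.
    - by rewrite -sz1.
    - by move=> i hi; rewrite -c1; [apply: h2|lia].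
    - by rewrite -sz2.
    - by move=> i hi; rewrite -c2; apply: h4.
  move=> [[h1 h2] [h3 h4]]; apply/andP; split; apply/pfP; split.
  - by rewrite sz1.
  - by move=> i hi; rewrite c1; [apply: h2|lia].
  - by rewrite sz2.
  - by move=> i hi; rewrite c2; apply: h4.
move: conv2 => conv2'.
have conv2 : forall (t : 'I_(N.+1 - k).+1),
   (pf (N - t) (filter (fun x => x <= N - t) u) &&
    pf t (map (subn^~ (N - t).+1) (filter (fun x => N - t < x) u))) <-> TP N C (N - t).
  move=> t; have ht := ltn_ord t.
  apply: conv2'; lia.
case: (boolP (pf N.+1 (k :: u))) => hpf.
  have [s [hsN hks hTs]] := dec_c hCN hmono hk (proj1 conv1 hpf).
  have ht0 : N - s < (N.+1 - k).+1 by lia.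
  rewrite (bigD1 (Ordinal ht0)) //= big1 ?addn0.
    by rewrite mulnb (proj2 (conv2 (Ordinal ht0))) //= (_ : N - (N - s) = s) //; lia.
  move=> t ht; apply/eqP; rewrite mulnb eqb0; apply/negP => /conv2 hT.
  have := dec_b hCN hk (_ : N - t <= N) hsN hT hTs.
  move: ht; rewrite -val_eqE /=; have := ltn_ord t; lia.
rewrite big1 // => t _; apply/eqP; rewrite mulnb eqb0; apply/negP => /conv2 hT.
apply: (negP hpf); apply/(proj2 conv1).
apply: (dec_a hCN hmono hk _ _ hT); have := ltn_ord t; lia.
Qed.


Definition Pn m := cntw m.+1 m (pf m).

Lemma term_count N s m : s <= N -> m = N - s ->
  cntw N.+2 N (fun u => pf s (filter (fun x => x <= s) u) *
                        pf m (map (subn^~ s.+1) (filter (fun x => s < x) u)))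
  = 'C(N, s) * Pn s * Pn m.
Proof.
move=> hsN ->.
rewrite (shuffle N.+2 s N (pf s) (fun v => pf (N - s) (map (subn^~ s.+1) v))).
have hs : s < N.+1 by lia.
rewrite (bigD1 (Ordinal hs)) //= big1 ?addn0; last first.
  move=> j hj; rewrite /Aw cntw_zero ?mul0n ?muln0 //.
  move=> v hv _; rewrite /pf hv; case: eqP => [hjs|]; last by rewrite /= muln0.
  by move: hj; rewrite -val_eqE /= hjs eqxx.
congr (_ * _ * _).
  rewrite /Aw (cntw_bound (B' := s.+1)) //; last first.
    move=> v _ _; case: (boolP (all (fun x => x <= s) v)) => //= h _.
    by lia.
  rewrite /Pn; apply: cntw_ext => v _ hv.
  by rewrite (_ : all (fun x => x <= s) v = true) ?mul1n //.
rewrite /Bw (_ : N.+2 = s.+1 + (N - s).+1); last by lia.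
exact: cntw_shift.
Qed.

Lemma pf_pos m u : pf m u -> all (fun x => 0 < x) u.
Proof.
case/pfP => hs H; case: m hs H => [|m] hs H; first by case: u {H} hs.
have := H m.+1 (leqnn _).
have := count_size (fun x => 0 < x <= m.+1) u; rewrite hs => h1 h2.
have : count (fun x => 0 < x <= m.+1) u == size u by rewrite hs eqn_leq h1 h2.
rewrite -all_count => /allP hA; apply/allP => x /hA; lia.
Qed.

Lemma isPF_pf n (p : n.-tuple 'I_n.+1) : is_parking_function p = pf n (map val p).
Proof.
rewrite /is_parking_function; apply/idP/idP.
  case/andP => /allP hpos /forallP H; apply/pfP; split; first by rewrite size_map size_tuple.
  move=> i hi; have hi' : i < n.+1 by lia.
  have := H (Ordinal hi') => /implyP /= /(_ ltac:(lia)).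
  rewrite count_map; congr (_ <= _); apply: eq_in_count => x hx /=.
  by rewrite (hpos x hx).
move=> hpf; apply/andP; split.
  by have := pf_pos hpf; rewrite all_map.
apply/forallP => i; apply/implyP => hi.
case/pfP: hpf => _ /(_ i ltac:(have := ltn_ord i; lia)).
rewrite count_map => /leq_trans; apply; apply: sub_count => x /=; rewrite /preim /=; lia.
Qed.

Lemma card_cntw n k :
  #|[set p in PF n | pf_first p == k]| = cntw n.+1 n (fun u => pf n u && (head 0 u == k)).
Proof.
rewrite -sum1_card big_mkcond /cntw; apply: eq_bigr => p _.
by rewrite !inE isPF_pf /pf_first nth0; case: (_ && _).
Qed.

Lemma first_count N k : 0 < k <= N.+1 ->
  cntw N.+2 N.+1 (fun u => pf N.+1 u && (head 0 u == k)) = cntw N.+2 N (fun s => pf N.+1 (k :: s)).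
Proof.
move=> hk; rewrite cntwS.
have hk' : k < N.+2 by lia.
rewrite (bigD1 (Ordinal hk')) //= big1 ?addn0.
  by apply: cntw_ext => s _ _; rewrite eqxx andbT.
move=> x hx; apply: cntw_zero => s _ _ /=.
move: hx; rewrite -val_eqE /= => /negbTE ->; by rewrite andbF.
Qed.

Lemma Pq m : ((Pn m)%:R : rat) = ((m.+1)%:R ^ (m%:Z - 1))%R.
Proof.
have := pollak m; rewrite -/(Pn m).
case: m => [|m] H.
  by rewrite exp1rz; move: H; rewrite mul1n expn0 => ->.
have -> : (m.+1%:Z - 1 = m%:Z)%R by rewrite -addn1 PoszD addrK.
have -> : Pn m.+1 = m.+2 ^ m.
  by apply/eqP; rewrite -(eqn_pmul2l (ltn0Sn m.+1)) H expnS.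
by rewrite natrX.
Qed.

Theorem corollary1 (n k : nat) (hn : (1 <= n)%N) (hk1 : (1 <= k)%N) (hkn : (k <= n)%N) :
  ((#|[set p in PF n | pf_first p == k]|%:R : rat)
  = \sum_(0 <= s < (n - k).+1)
      'C(n.-1, s)%:R * ((s.+1)%:R ^ (s%:Z - 1)) * ((n - s)%:R ^ ((n - s)%:Z - 2)))%R.
Proof.
case: n hn hkn => [//|N] _ hkn.
have hk : 0 < k <= N.+1 by lia.
rewrite card_cntw first_count //.
rewrite (cntw_ext (w2 := fun u => \sum_(t < (N.+1 - k).+1)
     (pf (N - t) (filter (fun x => x <= N - t) u) *
      pf t (map (subn^~ (N - t).+1) (filter (fun x => N - t < x) u))))); last first.
  by move=> u hu hb; apply: decomp.
rewrite cntw_sum natr_sum big_mkord /=; apply: eq_bigr => -[t ht0] _ /=.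
have ht : t <= N by lia.
rewrite (@term_count N (N - t) t) ?leq_subr; last by lia.
rewrite bin_sub // !natrM !Pq mulrAC -(subSn ht).
congr (_ * _ ^ _ * _ ^ _)%R.
rewrite (subSn ht) -addn1 PoszD; lia.
done.
Qed.
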